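(* Let $\lambda$ be a regular uncountable cardinal and $S\subseteq\lambda$ stationary. If $\mathsf{DSR}(1,S)$ holds, then $\mathrm{Refl}(\omega,S)$ holds.
   Context: A set $T$ of ordinals reflects at $\gamma$ if $\mathrm{cf}(\gamma)>\omega$ and $T\cap\gamma$ is stationary in $\gamma$. $\mathsf{DSR}(1,S)$ asserts: whenever $\langle S_{\alpha,i}\mid\alpha<\lambda,\ i<j_\alpha\rangle$ is a matrix of stationary subsets of $S$ with $j_\alpha\le 1$ for all $\alpha$, there are $\gamma<\lambda$ of uncountable cofinality and a club $F\subseteq\gamma$ such that $S_{\alpha,i}$ reflects at $\gamma$ for all $\alpha\in F$ and $i<j_\alpha$ (equivalently: for every sequence $\langle S_\alpha\mid\alpha<\lambda\rangle$ of stationary subsets of $S$ there are such $\gamma$ and club $F\subseteq\gamma$ with $S_\alpha$ reflecting at $\gamma$ for all $\alpha\in F$). $\mathrm{Refl}(\omega,S)$ asserts that every family of countably many stationary subsets of $S$ reflects simultaneously, i.e., there is $\gamma<\lambda$ at which every member of the family reflects. *)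

(* Defs.v *)
(* The regular cardinal lambda is modelled as a well-ordered
   type (T, lt): an ordinal gamma < lambda is an element gamma : T, identified
   with its initial segment {x | lt x gamma}. *)
From Stdlib Require Import Arith.

Section SetTheory.
Variable T : Type.
Variable lt : T -> T -> Prop.

Definition well_order : Prop :=
  (forall x, ~ lt x x) /\
  (forall x y z, lt x y -> lt y z -> lt x z) /\
  (forall x y, lt x y \/ x = y \/ lt y x) /\
  well_founded lt.

Definition le (x y : T) : Prop := lt x y \/ x = y.

Definition below (g : T) : T -> Prop := fun x => lt x g.
Definition whole : T -> Prop := fun _ => True.

Definition is_cardinal : Prop :=
  forall (g : T) (f : T -> T),
    (forall x y, f x = f y -> x = y) -> exists x, ~ lt (f x) g.

Definition uncountable : Prop :=
  ~ exists f : T -> nat, forall x y, f x = f y -> x = y.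

Definition is_regular : Prop :=
  forall A : T -> Prop, (forall x, exists a, A a /\ le x a) ->
    exists f : T -> T, (forall x y, f x = f y -> x = y) /\ (forall x, A (f x)).

Definition regular_uncountable_cardinal : Prop :=
  is_cardinal /\ is_regular /\ uncountable.

Definition uncountable_cof (g : T) : Prop :=
  (exists x, lt x g) /\
  ~ exists f : nat -> T, (forall n, lt (f n) g) /\
                         (forall x, lt x g -> exists n, le x (f n)).

(* clubs and stationary sets inside a domain D (D = below gamma, or whole) *)
Definition unbounded_in (D A : T -> Prop) : Prop :=
  forall x, D x -> exists a, A a /\ D a /\ lt x a.

Definition closed_in (D A : T -> Prop) : Prop :=
  forall b, D b -> (exists x, lt x b) ->
    (forall x, lt x b -> exists a, A a /\ lt x a /\ lt a b) -> A b.

Definition club_in (D A : T -> Prop) : Prop :=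
  (forall a, A a -> D a) /\ unbounded_in D A /\ closed_in D A.

Definition stationary_in (D X : T -> Prop) : Prop :=
  forall C, club_in D C -> exists x, X x /\ C x.

Definition stationary (X : T -> Prop) : Prop := stationary_in whole X.

Definition reflects_at (X : T -> Prop) (g : T) : Prop :=
  uncountable_cof g /\ stationary_in (below g) X.

Definition subset (X Y : T -> Prop) : Prop := forall x, X x -> Y x.

(* DSR(1,S), matrix form: rows alpha < lambda of length j alpha <= 1 *)
Definition DSR1 (S : T -> Prop) : Prop :=
  forall (j : T -> nat) (M : T -> nat -> T -> Prop),
    (forall a, j a <= 1) ->
    (forall a i, i < j a -> stationary (M a i) /\ subset (M a i) S) ->
    exists g, uncountable_cof g /\
      exists F, club_in (below g) F /\
        forall a, F a -> forall i, i < j a -> reflects_at (M a i) g.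

Definition Refl_omega (S : T -> Prop) : Prop :=
  forall M : nat -> T -> Prop,
    (forall n, stationary (M n) /\ subset (M n) S) ->
    exists g, forall n, reflects_at (M n) g.

End SetTheory.

(* Main.v *)
Require Import Defs.
From Stdlib Require Import Arith Lia Classical ClassicalEpsilon.

Section S.
Variable T : Type.
Variable lt : T -> T -> Prop.
Hypothesis WO : well_order T lt.
Hypothesis RUC : regular_uncountable_cardinal T lt.

Local Notation "x << y" := (lt x y) (at level 70).
Local Notation lee := (le T lt).
Local Notation stat := (stationary T lt).
Local Notation club := (club_in T lt (whole T)).

Lemma irr : forall x, ~ x << x. Proof. apply WO. Qed.
Lemma trans : forall x y z, x << y -> y << z -> x << z. Proof. apply WO. Qed.
Lemma tri : forall x y, x << y \/ x = y \/ y << x. Proof. apply WO. Qed.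
Lemma wf : well_founded lt. Proof. apply WO. Qed.

Lemma lee_lt_trans : forall x y z, lee x y -> y << z -> x << z.
Proof. intros x y z [H|H] H'; [eapply trans; eauto | subst; auto]. Qed.
Lemma lt_lee_trans : forall x y z, x << y -> lee y z -> x << z.
Proof. intros x y z H [H'|H']; [eapply trans; eauto | subst; auto]. Qed.
Lemma not_lt_lee : forall x y, ~ x << y -> lee y x.
Proof. intros x y H. destruct (tri x y) as [h|[h|h]]; [tauto|right; auto|left; auto]. Qed.
Lemma lee_not_lt : forall x y, lee x y -> ~ y << x.
Proof. intros x y H H'. pose proof (lee_lt_trans _ _ _ H H'). eapply irr; eauto. Qed.

Lemma min_ex : forall P : T -> Prop, (exists x, P x) -> exists x, P x /\ forall y, P y -> ~ y << x.
Proof.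
  intros P [x Hx]. revert Hx. induction x as [x IH] using (well_founded_ind wf).
  intros Hx. destruct (classic (exists y, P y /\ y << x)) as [[y [Py Hy]]|N].
  - exact (IH y Hy Py).
  - exists x. split; auto. intros y Py Hy. apply N; eauto.
Qed.

Lemma inhab : exists m : T, True.
Proof.
  destruct RUC as [_ [_ U]]. apply NNPP. intro N. apply U.
  exists (fun _ => 0). intros x. exfalso. apply N. exists x; auto.
Qed.

Lemma no_max : forall x, exists y, x << y.
Proof.
  destruct RUC as [_ [REG U]]. intros m. apply NNPP. intro N.
  assert (Hm : forall y, lee y m).
  { intro y. apply not_lt_lee. intro h. apply N. exists y; auto. }
  destruct (REG (fun a => a = m)) as [f [Hf1 Hf2]].
  { intro x. exists m. auto. }
  apply U. exists (fun _ => 0). intros x y _. apply Hf1. rewrite (Hf2 x), (Hf2 y). auto.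
Qed.

Lemma cb : forall s : nat -> T, exists b, forall n, s n << b.
Proof.
  destruct RUC as [_ [REG U]]. intros s. apply NNPP. intro N.
  destruct (REG (fun a => exists n, s n = a)) as [f [Hf1 Hf2]].
  { intro x. apply NNPP. intro N2. apply N. exists x. intro n. apply NNPP. intro h.
    apply N2. exists (s n). split; eauto. apply not_lt_lee; auto. }
  apply U. exists (fun x => proj1_sig (constructive_indefinite_description _ (Hf2 x))).
  intros x y H.
  destruct (constructive_indefinite_description _ (Hf2 x)) as [n Hn].
  destruct (constructive_indefinite_description _ (Hf2 y)) as [k Hk]. simpl in H. subst.
  apply Hf1. congruence.
Qed.

Lemma bb : forall (d : T) (f : T -> T), exists b, forall x, x << d -> f x << b.
Proof.
  destruct RUC as [CARD [REG U]]. intros d f. apply NNPP. intro N.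
  destruct (REG (fun a => exists x, x << d /\ f x = a)) as [h [Hh1 Hh2]].
  { intro y. apply NNPP. intro N2. apply N. exists y. intros x Hx. apply NNPP. intro h.
    apply N2. exists (f x). split; eauto. apply not_lt_lee; auto. }
  destruct (CARD d (fun y => proj1_sig (constructive_indefinite_description _ (Hh2 y)))) as [y Hy].
  { intros x y H.
    destruct (constructive_indefinite_description _ (Hh2 x)) as [n [Hn0 Hn]].
    destruct (constructive_indefinite_description _ (Hh2 y)) as [k [Hk0 Hk]]. simpl in H. subst.
    apply Hh1. congruence. }
  destruct (constructive_indefinite_description _ (Hh2 y)) as [n [Hn Hn1]]. simpl in Hy. tauto.
Qed.

Lemma sup_ex : forall s : nat -> T, exists sg, (forall n, s n << sg) /\ (forall b, (forall n, s n << b) -> lee sg b).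
Proof.
  intros s. destruct (min_ex (fun b => forall n, s n << b) (cb s)) as [sg [H1 H2]].
  exists sg. split; auto. intros b Hb. apply not_lt_lee. intro h. exact (H2 b Hb h).
Qed.

Definition incr (s : nat -> T) := forall n, s n << s (S n).

Lemma incr_mono : forall s, incr s -> forall n m, n < m -> s n << s m.
Proof.
  intros s Hs n m H. induction H. apply Hs. eapply trans; eauto.
Qed.
Lemma incr_mono_le : forall s, incr s -> forall n m, n <= m -> lee (s n) (s m).
Proof.
  intros s Hs n m H. destruct (Nat.eq_dec n m). subst; right; auto. left; apply incr_mono; auto; lia.
Qed.

Lemma sup_lim : forall s sg, incr s -> (forall n, s n << sg) -> (forall b, (forall n, s n << b) -> lee sg b) ->
  forall x, x << sg -> exists n, x << s n.
Proof.
  intros s sg Hs H1 H2 x Hx. apply NNPP. intro N.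
  assert (forall n, s n << x).
  { intro n. apply lt_lee_trans with (s (S n)); [apply Hs|]. apply not_lt_lee. intro h. apply N; eauto. }
  apply (lee_not_lt _ _ (H2 x H) Hx).
Qed.

Lemma iter_ex : forall (R : T -> T -> Prop), (forall x, exists y, x << y /\ R x y) ->
  forall x0, exists s : nat -> T, s 0 = x0 /\ incr s /\ forall n, R (s n) (s (S n)).
Proof.
  intros R H x0.
  set (nx := fun x => proj1_sig (constructive_indefinite_description _ (H x))).
  assert (Hnx : forall x, x << nx x /\ R x (nx x)).
  { intro x. unfold nx. destruct (constructive_indefinite_description _ (H x)); simpl; auto. }
  exists (fun n => Nat.iter n nx x0). split; [reflexivity|]. split.
  - intro n. simpl. apply Hnx.
  - intro n. simpl. apply Hnx.
Qed.


Definition issup (s : nat -> T) sg := (forall n, s n << sg) /\ (forall b, (forall n, s n << b) -> lee sg b).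

Lemma seq_closed : forall D C s sg, closed_in T lt D C -> D sg -> incr s -> issup s sg ->
  (forall n, exists a m, C a /\ s n << a /\ lee a (s m)) -> C sg.
Proof.
  intros D C s sg HC HD Hs [H1 H2] H. apply HC; auto.
  - exists (s 0). auto.
  - intros x Hx. destruct (sup_lim s sg Hs H1 H2 x Hx) as [n Hn].
    destruct (H n) as [a [m [Ca [Ha Hm]]]]. exists a. split; auto. split.
    + eapply trans; eauto.
    + eapply lee_lt_trans; eauto.
Qed.

Lemma mk_club : forall C, (forall x, exists a, C a /\ x << a) ->
  (forall b, (exists x, x << b) -> (forall x, x << b -> exists a, C a /\ x << a /\ a << b) -> C b) -> club C.
Proof.
  intros C H1 H2. split; [intros; exact I|]. split.
  - intros x _. destruct (H1 x) as [a [? ?]]. exists a. repeat split; auto.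
  - intros b _ Hb H. apply H2; auto.
Qed.

Lemma club_unb : forall C, club C -> forall x, exists a, C a /\ x << a.
Proof. intros C [_ [H _]] x. destruct (H x I) as [a [? [_ ?]]]. eauto. Qed.

Lemma club_closed : forall C, club C -> closed_in T lt (whole T) C.
Proof. intros C [_ [_ H]]. exact H. Qed.

Lemma stat_mono : forall D X Y, stationary_in T lt D X -> (forall x, X x -> Y x) -> stationary_in T lt D Y.
Proof. intros D X Y H HXY C HC. destruct (H C HC) as [x [? ?]]. eauto. Qed.

Lemma club_true : club (fun _ => True).
Proof. apply mk_club; auto. intro x. destruct (no_max x) as [y ?]. eauto. Qed.

Lemma stat_ne : forall X, stat X -> exists x, X x.
Proof. intros X H. destruct (H _ club_true) as [x [? _]]. eauto. Qed.

Lemma max2 : forall x y, exists z, lee x z /\ lee y z.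
Proof.
  intros x y. destruct (tri x y) as [h|[h|h]].
  - exists y. split; [left|right]; auto.
  - subst. exists y. split; right; auto.
  - exists x. split; [right|left]; auto.
Qed.

Lemma above2 : forall x y, exists z, x << z /\ y << z.
Proof.
  intros x y. destruct (max2 x y) as [m [H1 H2]]. destruct (no_max m) as [z Hz].
  exists z. split; eapply lee_lt_trans; eauto.
Qed.

Lemma club_tail : forall m, club (fun y => m << y).
Proof.
  intro m. apply mk_club.
  - intro x. destruct (above2 x m) as [z [? ?]]. eauto.
  - intros b [x Hx] H. destruct (H x Hx) as [a [? [? ?]]]. eapply trans; eauto.
Qed.

Lemma club_inter2 : forall C1 C2, club C1 -> club C2 -> club (fun x => C1 x /\ C2 x).
Proof.
  intros C1 C2 H1 H2. apply mk_club.
  - intro x.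
    destruct (iter_ex (fun u v => exists a, C1 a /\ u << a /\ a << v /\ C2 v)) with (x0 := x)
      as [s [Hs0 [Hs HR]]].
    { intro u. destruct (club_unb _ H1 u) as [a [Ca Ha]]. destruct (club_unb _ H2 a) as [v [Cv Hv]].
      exists v. split; [eapply trans; eauto|]. eauto. }
    destruct (sup_ex s) as [sg Hsg].
    exists sg. split; [split|].
    + apply (seq_closed (whole T) C1 s sg (club_closed _ H1) I Hs Hsg).
      intro n. destruct (HR n) as [a [Ca [Ha [Hb _]]]]. exists a, (S n). split; auto. split; auto. left; auto.
    + apply (seq_closed (whole T) C2 s sg (club_closed _ H2) I Hs Hsg).
      intro n. destruct (HR n) as [a [Ca [Ha [Hb Hc]]]]. exists (s (S n)), (S n). split; auto. split; auto. right; auto.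
    + subst. apply Hsg.
  - intros b Hb H. split.
    + apply (club_closed _ H1 b I Hb). intros y Hy. destruct (H y Hy) as [a [[? ?] ?]]. eauto.
    + apply (club_closed _ H2 b I Hb). intros y Hy. destruct (H y Hy) as [a [[? ?] ?]]. eauto.
Qed.

Lemma stat_club : forall X C, stat X -> club C -> stat (fun x => X x /\ C x).
Proof.
  intros X C HX HC D HD. destruct (HX _ (club_inter2 _ _ HC HD)) as [x [? [? ?]]]. eauto.
Qed.

Lemma stat_union : forall X A B, stat X -> (forall x, X x -> A x \/ B x) -> stat A \/ stat B.
Proof.
  intros X A B HX H. apply NNPP. intro N.
  assert (NA : ~ stat A) by tauto. assert (NB : ~ stat B) by tauto.
  unfold stationary, stationary_in in NA, NB.
  apply not_all_ex_not in NA. destruct NA as [CA NA].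
  apply not_all_ex_not in NB. destruct NB as [CB NB].
  apply imply_to_and in NA. apply imply_to_and in NB. destruct NA as [HCA NA]. destruct NB as [HCB NB].
  destruct (HX _ (club_inter2 _ _ HCA HCB)) as [x [Xx [Ax Bx]]].
  destruct (H x Xx); [apply NA | apply NB]; eauto.
Qed.

Definition Lim (b : T) := (exists x, x << b) /\ forall x, x << b -> exists y, x << y /\ y << b.

Lemma sup_Lim : forall s sg, incr s -> issup s sg -> Lim sg.
Proof.
  intros s sg Hs [H1 H2]. split. exists (s 0); auto.
  intros x Hx. destruct (sup_lim s sg Hs H1 H2 x Hx) as [n Hn]. eauto.
Qed.

Lemma club_Lim : club Lim.
Proof.
  apply mk_club.
  - intro x. destruct (iter_ex (fun _ _ => True)) with (x0 := x) as [s [Hs0 [Hs _]]].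
    { intro u. destruct (no_max u) as [v ?]. eauto. }
    destruct (sup_ex s) as [sg Hsg]. exists sg. split. eapply sup_Lim; eauto. subst; apply Hsg.
  - intros b Hb H. split; auto. intros x Hx. destruct (H x Hx) as [a [? [? ?]]]. eauto.
Qed.

Definition Acc' (C : T -> Prop) (b : T) := (exists x, x << b) /\ forall x, x << b -> exists a, C a /\ x << a /\ a << b.

Lemma Acc_sub : forall C, club C -> forall b, Acc' C b -> C b.
Proof. intros C HC b [H1 H2]. apply (club_closed _ HC b I H1 H2). Qed.

Lemma club_Acc : forall C, club C -> club (Acc' C).
Proof.
  intros C HC. apply mk_club.
  - intro x. destruct (iter_ex (fun u v => C v)) with (x0 := x) as [s [Hs0 [Hs HR]]].
    { intro u. destruct (club_unb _ HC u) as [v [? ?]]. eauto. }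
    destruct (sup_ex s) as [sg Hsg]. exists sg. split.
    + split. exists (s 0); apply Hsg. intros y Hy. destruct Hsg as [H1 H2].
      destruct (sup_lim s sg Hs H1 H2 y Hy) as [n Hn]. exists (s (S n)). split; auto. split; auto.
      eapply trans; eauto.
    + subst; apply Hsg.
  - intros b Hb H. split; auto. intros x Hx. destruct (H x Hx) as [a [[_ Ha] [? ?]]].
    destruct (Ha x) as [c [? [? ?]]]; auto. exists c. split; auto. split; auto. eapply trans; eauto.
Qed.


Lemma nonstat_club : forall X, ~ stat X -> exists C, club C /\ forall x, C x -> ~ X x.
Proof.
  intros X N. unfold stationary, stationary_in in N. apply not_all_ex_not in N. destruct N as [C N].
  apply imply_to_and in N. destruct N as [HC N]. exists C. split; auto. intros x Cx Xx. apply N; eauto.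
Qed.

Lemma inter_lt_unb : forall (C : T -> T -> Prop), (forall b, club (C b)) ->
  forall d x, exists a, x << a /\ forall b, b << d -> C b a.
Proof.
  intros C HC d x.
  destruct (iter_ex (fun u v => forall b, b << d -> exists a, C b a /\ u << a /\ a << v)) with (x0 := x)
    as [s [Hs0 [Hs HR]]].
  { intro u.
    set (nx := fun b => proj1_sig (constructive_indefinite_description _ (club_unb _ (HC b) u))).
    assert (Hnx : forall b, C b (nx b) /\ u << nx b).
    { intro b. unfold nx. destruct (constructive_indefinite_description _ (club_unb _ (HC b) u)); simpl; auto. }
    destruct (bb d nx) as [c Hc]. destruct (above2 c u) as [v [Hv1 Hv2]].
    exists v. split; auto. intros b Hb. exists (nx b). split; [apply Hnx|]. split; [apply Hnx|].
    eapply trans; eauto. }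
  destruct (sup_ex s) as [sg Hsg]. exists sg. split.
  - subst; apply Hsg.
  - intros b Hb. apply (seq_closed (whole T) (C b) s sg (club_closed _ (HC b)) I Hs Hsg).
    intro n. destruct (HR n b Hb) as [a [? [? ?]]]. exists a, (S n). split; auto. split; auto. left; auto.
Qed.

Lemma club_diag : forall (C : T -> T -> Prop), (forall b, club (C b)) ->
  club (fun a => forall b, b << a -> C b a).
Proof.
  intros C HC. apply mk_club.
  - intro x.
    destruct (iter_ex (fun u v => forall b, b << u -> C b v)) with (x0 := x) as [s [Hs0 [Hs HR]]].
    { intro u. destruct (inter_lt_unb C HC u u) as [a [? ?]]. eauto. }
    destruct (sup_ex s) as [sg Hsg]. exists sg. split.
    + intros b Hb. destruct Hsg as [H1 H2]. destruct (sup_lim s sg Hs H1 H2 b Hb) as [n Hn].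
      apply (seq_closed (whole T) (C b) s sg (club_closed _ (HC b)) I Hs (conj H1 H2)).
      intro k. exists (s (S (Nat.max k n))), (S (Nat.max k n)). split.
      * apply HR. eapply lt_lee_trans; eauto. apply incr_mono_le; auto; lia.
      * split; [apply incr_mono; auto; lia | right; auto].
    + subst; apply Hsg.
  - intros c Hc H b Hb. apply (club_closed _ (HC b) c I (ex_intro _ b Hb)).
    intros x Hx. destruct (tri x b) as [h|h].
    + destruct (H b Hb) as [a [Ha [? ?]]]. exists a. split; [apply Ha; auto|]. split; auto. eapply trans; eauto.
    + destruct (H x Hx) as [a [Ha [? ?]]]. exists a. split; [apply Ha|]; auto.
      destruct h as [h|h]; [subst; auto | eapply trans; eauto].
Qed.

Lemma fodor : forall (W : T -> Prop) (f : T -> T), stat W -> (forall a, W a -> f a << a) ->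
  exists b, stat (fun a => W a /\ f a = b).
Proof.
  intros W f HW Hf. apply NNPP. intro N.
  assert (H : forall b, exists C, club C /\ forall x, C x -> ~ (W x /\ f x = b)).
  { intro b. apply nonstat_club. intro h. apply N. eauto. }
  set (Cf := fun b => proj1_sig (constructive_indefinite_description _ (H b))).
  assert (HCf : forall b, club (Cf b) /\ forall x, Cf b x -> ~ (W x /\ f x = b)).
  { intro b. unfold Cf. destruct (constructive_indefinite_description _ (H b)); simpl; auto. }
  destruct (HW _ (club_diag Cf (fun b => proj1 (HCf b)))) as [a [Wa Ha]].
  apply (proj2 (HCf (f a)) a); auto.
Qed.


Lemma not_lee_lt : forall x y, ~ lee x y -> y << x.
Proof. intros x y H. destruct (tri x y) as [h|[h|h]]; auto; exfalso; apply H; [left|right]; auto. Qed.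

Definition pieces (W : T -> Prop) (P : T -> T -> Prop) :=
  (forall d a, P d a -> W a) /\ (forall d d' a, P d a -> P d' a -> d = d') /\
  (forall e, exists d, lee e d /\ stat (P d)).

Lemma lcore : forall W, stat W ->
  (forall a, W a -> exists C, club_in T lt (below T lt a) C /\ forall x, C x -> ~ W x) ->
  exists P, pieces W P.
Proof.
  intros W HW HC.
  assert (HC' : forall a, exists C, W a -> club_in T lt (below T lt a) C /\ forall x, C x -> ~ W x).
  { intro a. destruct (classic (W a)) as [h|h]. destruct (HC a h) as [C ?]. eauto.
    exists (fun _ => False). tauto. }
  set (Cf := fun a => proj1_sig (constructive_indefinite_description _ (HC' a))).
  assert (HCf : forall a, W a -> club_in T lt (below T lt a) (Cf a) /\ forall x, Cf a x -> ~ W x).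
  { intro a. unfold Cf. destruct (constructive_indefinite_description _ (HC' a)); simpl; auto. }
  assert (Hf' : forall xi a, exists c, (W a /\ xi << a) -> Cf a c /\ xi << c /\ c << a).
  { intros xi a. destruct (classic (W a /\ xi << a)) as [[h1 h2]|h].
    - destruct (HCf a h1) as [[_ [U _]] _]. destruct (U xi h2) as [c [? [? ?]]]. exists c. auto.
    - exists a. tauto. }
  set (f := fun xi a => proj1_sig (constructive_indefinite_description _ (Hf' xi a))).
  assert (Hf : forall xi a, W a -> xi << a -> Cf a (f xi a) /\ xi << f xi a /\ f xi a << a).
  { intros xi a h1 h2. unfold f. destruct (constructive_indefinite_description _ (Hf' xi a)); simpl; auto. }
  set (Z := fun xi e a => W a /\ xi << a /\ lee e (f xi a)).
  destruct (classic (exists xi, forall e, stat (Z xi e))) as [[xi Hxi]|N].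
  - exists (fun d a => W a /\ xi << a /\ f xi a = d). split; [|split].
    + intros d a [? _]; auto.
    + intros d d' a [_ [_ h1]] [_ [_ h2]]. congruence.
    + intro e. destruct (fodor (Z xi e) (f xi) (Hxi e)) as [b Hb].
      { intros a [h1 [h2 _]]. apply Hf; auto. }
      exists b. destruct (stat_ne _ Hb) as [a0 [[_ [_ Ha0]] Hb0]]. split.
      * rewrite <- Hb0; auto.
      * eapply stat_mono; [exact Hb|]. intros a [[h1 [h2 _]] h3]. auto.
  - assert (H2 : forall xi, exists p : T * (T -> Prop), club (snd p) /\ forall x, snd p x -> ~ Z xi (fst p) x).
    { intro xi. assert (exists e, ~ stat (Z xi e)) as [e He].
      { apply NNPP. intro h. apply N. exists xi. intro e. apply NNPP. intro h'. apply h; eauto. }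
      destruct (nonstat_club _ He) as [K [? ?]]. exists (e, K). simpl. auto. }
    set (ep := fun xi => proj1_sig (constructive_indefinite_description _ (H2 xi))).
    assert (Hep : forall xi, club (snd (ep xi)) /\ forall x, snd (ep xi) x -> ~ Z xi (fst (ep xi)) x).
    { intro xi. unfold ep. destruct (constructive_indefinite_description _ (H2 xi)); simpl; auto. }
    set (K' := fun xi y => snd (ep xi) y /\ fst (ep xi) << y).
    assert (HK' : forall xi, club (K' xi)).
    { intro xi. apply club_inter2; [apply Hep | apply club_tail]. }
    pose proof (club_diag K' HK') as HD.
    destruct inhab as [m0 _].
    destruct (HW _ (club_inter2 _ _ HD (club_tail m0))) as [b [Wb [Db Hb0]]].
    destruct (HW _ (club_inter2 _ _ HD (club_tail b))) as [a [Wa [Da Hab]]].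
    destruct (HCf a Wa) as [[_ [_ Cl]] Dis].
    exfalso. apply (Dis b); auto. apply Cl.
    + exact Hab.
    + exists m0; auto.
    + intros xi Hxi. assert (xa : xi << a) by (eapply trans; eauto).
      destruct (Hf xi a Wa xa) as [h1 [h2 h3]]. exists (f xi a). split; auto. split; auto.
      destruct (Da xi xa) as [Ka _]. destruct (Db xi Hxi) as [_ Kb].
      apply (proj2 (Hep xi)) in Ka. unfold Z in Ka.
      assert (~ lee (fst (ep xi)) (f xi a)) by tauto.
      eapply trans; [apply not_lee_lt; eauto | exact Kb].
Qed.


Lemma nat_min : forall P : nat -> Prop, (exists n, P n) -> exists n, P n /\ forall m, m < n -> ~ P m.
Proof.
  intros P [n Hn]. revert Hn. induction n as [n IH] using (well_founded_ind Nat.lt_wf_0).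
  intro Hn. destruct (classic (exists m, m < n /\ P m)) as [[m [h1 h2]]|N].
  - exact (IH m h1 h2).
  - exists n. split; auto. intros m h1 h2. apply N; eauto.
Qed.

Lemma max2' : forall x y, exists z, lee x z /\ lee y z /\ (z = x \/ z = y).
Proof.
  intros x y. destruct (tri x y) as [h|[h|h]].
  - exists y. split; [left|split;[right|]]; auto.
  - subst. exists y. split; [right|split;[right|]]; auto.
  - exists x. split; [right|split;[left|]]; auto.
Qed.

Definition sc (y : T) : T := proj1_sig (constructive_indefinite_description _ (min_ex _ (no_max y))).
Definition mx (a b : T) : T := proj1_sig (constructive_indefinite_description _ (max2' a b)).

Lemma sc_spec : forall y, y << sc y /\ forall z, y << z -> ~ z << sc y.
Proof. intro y. unfold sc. destruct (constructive_indefinite_description _ _); simpl; auto. Qed.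
Lemma mx_spec : forall a b, lee a (mx a b) /\ lee b (mx a b) /\ (mx a b = a \/ mx a b = b).
Proof. intros a b. unfold mx. destruct (constructive_indefinite_description _ _); simpl; auto. Qed.

Lemma sc_notLim : forall y, ~ Lim (sc y).
Proof.
  intros y [_ H]. destruct (sc_spec y) as [h1 h2]. destruct (H y h1) as [z [? ?]]. apply (h2 z); auto.
Qed.

Lemma sc_below : forall y a, Lim a -> y << a -> sc y << a.
Proof.
  intros y a [_ H] h. destruct (H y h) as [z [h1 h2]]. destruct (sc_spec y) as [_ h3].
  eapply lee_lt_trans; [apply not_lt_lee; apply h3; eauto | exact h2].
Qed.

Fixpoint gseq (f : nat -> T) (n : nat) : T :=
  match n with 0 => sc (f 0) | S n => sc (mx (gseq f n) (f (S n))) end.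

Lemma gseq_incr : forall f, incr (gseq f).
Proof. intros f n. simpl. apply lee_lt_trans with (mx (gseq f n) (f (S n))); [apply (proj1 (mx_spec _ _)) | apply (proj1 (sc_spec _))]. Qed.
Lemma gseq_f : forall f n, f n << gseq f n.
Proof.
  intros f [|n]; simpl. apply sc_spec. apply lee_lt_trans with (mx (gseq f n) (f (S n))); [apply (proj1 (proj2 (mx_spec _ _))) | apply (proj1 (sc_spec _))].
Qed.
Lemma gseq_below : forall f a, Lim a -> (forall n, f n << a) -> forall n, gseq f n << a.
Proof.
  intros f a La Hf n. induction n; simpl; apply sc_below; auto.
  destruct (mx_spec (gseq f n) (f (S n))) as [_ [_ [h|h]]]; rewrite h; auto.
Qed.

Lemma cofw_club : forall a, Lim a -> ~ uncountable_cof T lt a ->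
  exists C, club_in T lt (below T lt a) C /\ forall x, C x -> ~ Lim x.
Proof.
  intros a La Hu.
  assert (Hf : exists f : nat -> T, (forall n, f n << a) /\ (forall x, x << a -> exists n, lee x (f n))).
  { apply NNPP. intro N. apply Hu. split; [apply La|]. exact N. }
  destruct Hf as [f [Hf1 Hf2]].
  exists (fun x => exists n, gseq f n = x). split; [split; [|split]|].
  - intros x [n Hn]. subst. apply gseq_below; auto.
  - intros x Hx. destruct (Hf2 x Hx) as [n Hn]. exists (gseq f n). split; eauto. split.
    apply gseq_below; auto. eapply lee_lt_trans; eauto. apply gseq_f.
  - intros b Hb [x0 Hx0] H. exfalso.
    destruct (H x0 Hx0) as [c [[k Hk] [_ Hkb]]]. subst c.
    destruct (Hf2 b Hb) as [n Hn].
    destruct (nat_min (fun m => lee b (gseq f m))) as [m0 [Hm0 Hmin]].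
    { exists n. left. eapply lee_lt_trans; eauto. apply gseq_f. }
    destruct m0 as [|m].
    + apply (lee_not_lt _ _ Hm0). eapply lee_lt_trans; [|exact Hkb]. apply incr_mono_le; [apply gseq_incr|lia].
    + assert (Hgm : gseq f m << b) by (apply not_lee_lt; apply Hmin; lia).
      destruct (H _ Hgm) as [c [[k' Hk'] [h1 h2]]]. subst c.
      assert (m < k').
      { destruct (Nat.lt_ge_cases m k') as [?|h]; auto. exfalso.
        apply (lee_not_lt _ _ (incr_mono_le _ (gseq_incr f) _ _ h)). auto. }
      apply (lee_not_lt _ _ Hm0). eapply lee_lt_trans; [|exact h2].
      apply incr_mono_le; [apply gseq_incr|lia].
  - intros x [n Hn]. subst. destruct n; apply sc_notLim.
Qed.

Lemma pieces_mono : forall W X P, (forall a, W a -> X a) -> pieces W P -> pieces X P.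
Proof. intros W X P H [h1 [h2 h3]]. split; [|split]; eauto. Qed.

Lemma ucof_club : forall C a, club C -> uncountable_cof T lt a -> Acc' C a ->
  club_in T lt (below T lt a) (fun x => x << a /\ Acc' C x).
Proof.
  intros C a HC Ua Aa. split; [|split].
  - intros x [? _]; auto.
  - intros x Hx. destruct Aa as [_ Aa]. destruct (Aa x Hx) as [a0 [Ca0 [h1 h2]]].
    destruct (iter_ex (fun u v => u << a -> C v /\ v << a)) with (x0 := a0) as [s [Hs0 [Hs HR]]].
    { intro u. destruct (classic (u << a)) as [h|h].
      - destruct (Aa u h) as [v [? [? ?]]]. exists v. auto.
      - destruct (no_max u) as [v ?]. exists v. tauto. }
    assert (Hsa : forall n, s n << a).
    { induction n. rewrite Hs0; auto. apply HR; auto. }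
    destruct (sup_ex s) as [sg [H1 H2]].
    assert (Hsg : sg << a).
    { destruct (H2 a Hsa) as [h|h]; auto. subst. exfalso. apply Ua.
      exists s. split; auto. intros y Hy. destruct (sup_lim s _ Hs H1 H2 y Hy) as [n Hn]. exists n. left; auto. }
    assert (Acs : Acc' C sg).
    { split. exists (s 0); auto. intros y Hy. destruct (sup_lim s sg Hs H1 H2 y Hy) as [n Hn].
      exists (s (S n)). split; [apply HR; auto|]. split; auto. eapply trans; eauto. }
    exists sg. split; [split; auto|]. split. exact Hsg.
    eapply trans; eauto. rewrite <- Hs0. auto.
  - intros b Hb [x0 Hx0] H. split; auto. split; eauto.
    intros x Hx. destruct (H x Hx) as [c [[_ [_ Ac]] [h1 h2]]].
    destruct (Ac x h1) as [d [? [? ?]]]. exists d. split; auto. split; auto. eapply trans; eauto.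
Qed.

Lemma split_lemma : forall X, stat X -> exists P, pieces X P.
Proof.
  intros X HX.
  destruct (stat_union (fun a => X a /\ Lim a) (fun a => X a /\ uncountable_cof T lt a)
              (fun a => X a /\ Lim a /\ ~ uncountable_cof T lt a) (stat_club _ _ HX club_Lim)) as [HE|HW].
  { intros a [? ?]. destruct (classic (uncountable_cof T lt a)); tauto. }
  - set (XE := fun a => X a /\ uncountable_cof T lt a) in *.
    set (W := fun a => XE a /\ exists C, club_in T lt (below T lt a) C /\ forall x, C x -> ~ XE x).
    assert (HWs : stat W).
    { intros C HC. destruct (min_ex (fun a => XE a /\ Acc' C a)) as [a [[Xa Aa] Hmin]].
      { destruct (HE _ (club_Acc _ HC)) as [a ?]. eauto. }
      exists a. split; [|apply Acc_sub; auto]. split; auto.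
      exists (fun x => x << a /\ Acc' C x). split.
      + apply ucof_club; auto. apply Xa.
      + intros x [h1 h2] h3. apply (Hmin x); auto. }
    destruct (lcore W HWs) as [P HP].
    { intros a [_ [C [h1 h2]]]. exists C. split; auto. intros x Cx [h _]. apply (h2 x); auto. }
    exists P. eapply pieces_mono; [|exact HP]. intros a [[? _] _]; auto.
  - destruct (lcore _ HW) as [P HP].
    { intros a [_ [La Ua]]. destruct (cofw_club a La Ua) as [C [h1 h2]]. exists C. split; auto.
      intros x Cx [_ [h _]]. apply (h2 x); auto. }
    exists P. eapply pieces_mono; [|exact HP]. intros a [? _]; auto.
Qed.


Lemma sel : forall (Tn : nat -> T -> Prop) (Q : T -> Prop) k,
  (forall n, stat (fun x => Tn n x /\ ~ Q x)) ->
  exists P, (forall x, P x -> Tn k x /\ ~ Q x) /\ stat P /\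
            forall n, stat (fun x => (Tn n x /\ ~ Q x) /\ ~ P x).
Proof.
  intros Tn Q k HY.
  set (Y := fun n x => Tn n x /\ ~ Q x) in *.
  destruct (split_lemma (Y k) (HY k)) as [P [HP1 [HP2 HP3]]].
  set (bad := fun n d => ~ stat (fun x => Y n x /\ ~ P d x)).
  assert (Huniq : forall n d d', bad n d -> bad n d' -> d = d').
  { intros n d d' h1 h2. apply NNPP. intro hne.
    destruct (stat_union (Y n) (fun x => Y n x /\ ~ P d x) (fun x => Y n x /\ ~ P d' x) (HY n)) as [h|h].
    - intros x Yx. destruct (classic (P d x)) as [p|p]; [|left; auto].
      destruct (classic (P d' x)) as [p'|p']; [|right; auto]. exfalso. apply hne. eapply HP2; eauto.
    - apply h1; auto.
    - apply h2; auto. }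
  assert (Hb : forall n, exists d, (exists d', bad n d') -> bad n d).
  { intro n. destruct (classic (exists d', bad n d')) as [[d' h]|h]; [exists d'; auto|].
    destruct inhab as [m _]. exists m. tauto. }
  set (bn := fun n => proj1_sig (constructive_indefinite_description _ (Hb n))).
  assert (Hbn : forall n, (exists d', bad n d') -> bad n (bn n)).
  { intro n. unfold bn. destruct (constructive_indefinite_description _ (Hb n)); simpl; auto. }
  destruct (cb bn) as [b Hbd].
  destruct (HP3 b) as [d [Hd1 Hd2]].
  exists (P d). split; [intros x hx; exact (HP1 d x hx)|]. split; [exact Hd2|].
  intro n. apply NNPP. intro h.
  assert (bad n d) by exact h.
  assert (E : bn n = d) by (eapply Huniq; [apply Hbn|]; eauto).
  apply (lee_not_lt _ _ Hd1). rewrite <- E. apply Hbd.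
Qed.

Definition tt (i : nat) : nat := i - Nat.sqrt i * Nat.sqrt i.

Lemma tt_inf : forall n k, exists i, k <= i /\ tt i = n.
Proof.
  intros n k. exists ((n + k) * (n + k) + n). unfold tt.
  rewrite (Nat.sqrt_unique _ (n + k)). split; nia. split; nia.
Qed.

Fixpoint Qs (pk : nat -> (T -> Prop) -> T -> Prop) (i : nat) : T -> Prop :=
  match i with
  | 0 => fun _ => False
  | S i' => fun x => Qs pk i' x \/ pk (tt i') (Qs pk i') x
  end.

Lemma Qs_mono : forall pk j i x, j <= i -> Qs pk j x -> Qs pk i x.
Proof. intros pk j i x H. induction H; auto. intro h. simpl. left; auto. Qed.

Lemma family : forall Tn : nat -> T -> Prop, (forall n, stat (Tn n)) ->
  exists U : nat -> T -> Prop, (forall i, stat (U i)) /\ (forall i x, U i x -> Tn (tt i) x) /\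
    (forall i j x, U i x -> U j x -> i = j).
Proof.
  intros Tn HT.
  assert (E : forall k Q, exists P, (forall n, stat (fun x => Tn n x /\ ~ Q x)) ->
     (forall x, P x -> Tn k x /\ ~ Q x) /\ stat P /\ forall n, stat (fun x => (Tn n x /\ ~ Q x) /\ ~ P x)).
  { intros k Q. destruct (classic (forall n, stat (fun x => Tn n x /\ ~ Q x))) as [h|h].
    - destruct (sel Tn Q k h) as [P ?]. eauto.
    - exists Q. tauto. }
  set (pk := fun k Q => proj1_sig (constructive_indefinite_description _ (E k Q))).
  assert (Hpk : forall k Q, (forall n, stat (fun x => Tn n x /\ ~ Q x)) ->
     (forall x, pk k Q x -> Tn k x /\ ~ Q x) /\ stat (pk k Q) /\ forall n, stat (fun x => (Tn n x /\ ~ Q x) /\ ~ pk k Q x)).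
  { intros k Q. unfold pk. destruct (constructive_indefinite_description _ (E k Q)); simpl; auto. }
  assert (INV : forall i n, stat (fun x => Tn n x /\ ~ Qs pk i x)).
  { induction i; intro n.
    - eapply stat_mono; [apply (HT n)|]. simpl. auto.
    - destruct (Hpk (tt i) (Qs pk i) IHi) as [_ [_ h]]. eapply stat_mono; [apply (h n)|].
      simpl. intros x [[? ?] ?]. tauto. }
  exists (fun i => pk (tt i) (Qs pk i)). split; [|split].
  - intro i. apply (Hpk _ _ (INV i)).
  - intros i x h. apply (Hpk _ _ (INV i)); auto.
  - assert (key : forall i j x, j < i -> pk (tt i) (Qs pk i) x -> pk (tt j) (Qs pk j) x -> False).
    { intros i j x hij hi hj. apply (proj1 (Hpk _ _ (INV i)) x hi).
      apply Qs_mono with (S j); auto. simpl. right; auto. }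
    intros i j x hi hj. destruct (Nat.lt_trichotomy i j) as [h|[h|h]]; auto; exfalso; eapply key; eauto.
Qed.

Theorem main_sec (SS : T -> Prop) : stationary T lt SS -> DSR1 T lt SS -> Refl_omega T lt SS.
Proof.
  intros HS DSR M HM.
  destruct (family M (fun n => proj1 (HM n))) as [U [HU1 [HU2 HU3]]].
  set (row := fun a x => (exists i, U i a /\ U (S i) x) \/ ((forall i, ~ U i a) /\ U 0 x)).
  destruct (DSR (fun _ => 1) (fun a _ => row a)) as [g [Ug [F [HF HR]]]].
  { intros; auto. }
  { intros a i _. split.
    - destruct (classic (exists i, U i a)) as [[k Hk]|h].
      + eapply stat_mono; [apply (HU1 (S k))|]. intros x hx. left. eauto.
      + eapply stat_mono; [apply (HU1 0)|]. intros x hx. right. split; auto. intros i' h'. apply h; eauto.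
    - intros x [[k [_ hx]]|[_ hx]]; apply HU2 in hx; eapply (proj2 (HM _)); exact hx. }
  set (sg := stationary_in T lt (below T lt g)).
  assert (step : forall a, F a -> (exists i, U i a /\ sg (U (S i))) \/ ((forall i, ~ U i a) /\ sg (U 0))).
  { intros a Fa. destruct (HR a Fa 0 ltac:(auto)) as [_ Hst].
    destruct (classic (exists i, U i a)) as [[k Hk]|h].
    - left. exists k. split; auto. eapply stat_mono; [exact Hst|].
      intros x [[i [h1 h2]]|[h1 h2]]. assert (i = k) by (eapply HU3; eauto). subst; auto.
      exfalso; eapply h1; eauto.
    - right. split. intros i h'. apply h; eauto. eapply stat_mono; [exact Hst|].
      intros x [[i [h1 h2]]|[h1 h2]]; auto. exfalso; apply h; eauto. }
  assert (k0ex : exists k0, sg (U k0)).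
  { destruct Ug as [[x Hx] _]. destruct HF as [_ [Hunb _]]. destruct (Hunb x Hx) as [a [Fa _]].
    destruct (step a Fa) as [[i [_ h]]|[_ h]]; eauto. }
  destruct k0ex as [k0 Hk0].
  assert (up : forall d, sg (U (k0 + d))).
  { induction d. rewrite Nat.add_0_r; auto.
    destruct (IHd F HF) as [a [Ua Fa]].
    destruct (step a Fa) as [[i [h1 h2]]|[h1 h2]].
    - assert (i = k0 + d) by (eapply HU3; eauto). subst. rewrite Nat.add_succ_r. auto.
    - exfalso; eapply h1; eauto. }
  exists g. intro n. split; auto.
  destruct (tt_inf n k0) as [i [hi1 hi2]].
  replace i with (k0 + (i - k0)) in hi2 by lia.
  eapply stat_mono; [apply (up (i - k0))|]. intros x hx. rewrite <- hi2. apply HU2; auto.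
Qed.

End S.

Theorem lemma2p4 (T : Type) (lt : T -> T -> Prop) (S : T -> Prop) :
  well_order T lt ->
  regular_uncountable_cardinal T lt ->
  stationary T lt S ->
  DSR1 T lt S ->
  Refl_omega T lt S.
Proof.
  intros WO RUC. exact (main_sec T lt WO RUC S).
Qed.
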